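(* If there exists a non-degenerate triangular dynamical $r$-matrix $r:\mathfrak h^*\to\wedge^2\mathfrak g$, then $\mathfrak g$ admits a reductive decomposition $\mathfrak g=\mathfrak h\oplus\mathfrak m$, i.e. a linear subspace $\mathfrak m$ complementary to $\mathfrak h$ with $[\mathfrak h,\mathfrak m]\subset\mathfrak m$.
   Context: Let $\mathfrak g$ be a finite-dimensional real Lie algebra and $\mathfrak h\subset\mathfrak g$ an abelian subalgebra with basis $h_1,\dots,h_l$; $(\lambda^i)$ are the induced coordinates on $\mathfrak h^*$. A triangular dynamical $r$-matrix is a smooth $r:\mathfrak h^*\to\wedge^2\mathfrak g$ with $[h,r(\lambda)]=0$ for $h\in\mathfrak h$ and $\sum_i h_i\wedge\frac{\partial r}{\partial\lambda^i}+\frac12[r,r]=0$ (Schouten-type bracket). It is non-degenerate if $\mathfrak h+r(\lambda)^\#\mathfrak h^\perp=\mathfrak g$ for all $\lambda$, where $\langle\rho^\#\xi,\eta\rangle=\rho(\xi,\eta)$ and $\mathfrak h^\perp\subset\mathfrak g^*$ is the annihilator of $\mathfrak h$. *)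

(* Defs.v *)
(* MathComp + MathComp-Analysis.  g = 'rV[R]_n (coordinates in a basis
   e_1..e_n), g^* = 'rV[R]_n with the pairing <xi, x> = \sum_a xi_a x_a. *)
From HB Require Import structures.
From mathcomp Require Import all_boot all_order all_algebra.
From mathcomp Require Import all_classical all_reals all_analysis.
Set Implicit Arguments. Unset Strict Implicit. Unset Printing Implicit Defensive.
Import Order.TTheory GRing.Theory Num.Theory.
Import numFieldNormedType.Exports.
Local Open Scope ring_scope.

Section LieDefs.
Variables (R : realType) (n : nat).

Definition is_lie_bracket (br : 'rV[R]_n -> 'rV[R]_n -> 'rV[R]_n) : Prop :=
  [/\ (forall (a : R) x y z, br (a *: x + y) z = a *: br x z + br y z),
      (forall (a : R) x y z, br z (a *: x + y) = a *: br z x + br z y),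
      (forall x, br x x = 0) &
      (forall x y z, br x (br y z) + br y (br z x) + br z (br x y) = 0)].

Definition ebas (a : 'I_n) : 'rV[R]_n := delta_mx 0 a.

Definition dpair (xi x : 'rV[R]_n) : R := \sum_(a < n) xi 0 a * x 0 a.

(** Bivectors (elements of wedge^2 g) are represented by skew_mx-symmetric
    matrices P, standing for 1/2 \sum_{a,b} P_ab e_a /\ e_b; the matrix of
    x /\ y is x^T y - y^T x. *)
Definition skew_mx (P : 'M[R]_n) : Prop := P^T = - P.
Definition wedge2 (x y : 'rV[R]_n) : 'M[R]_n := x^T *m y - y^T *m x.
Definition bv_eval (P : 'M[R]_n) (xi eta : 'rV[R]_n) : R :=
  \sum_(a < n) \sum_(b < n) P a b * xi 0 a * eta 0 b.

(** rho^# : g^* -> g, defined by <rho^# xi, eta> = rho(xi, eta) *)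
Definition sharp (P : 'M[R]_n) (xi : 'rV[R]_n) : 'rV[R]_n :=
  \row_(b < n) \sum_(a < n) xi 0 a * P a b.

Definition ad_bv (br : 'rV[R]_n -> 'rV[R]_n -> 'rV[R]_n) (y : 'rV[R]_n)
  (P : 'M[R]_n) : 'M[R]_n :=
  2^-1 *: \sum_(a < n) \sum_(b < n)
     P a b *: (wedge2 (br y (ebas a)) (ebas b) + wedge2 (ebas a) (br y (ebas b))).

(** Trivectors (elements of wedge^3 g) are represented as trilinear forms on
    g^*; x /\ y /\ z evaluates by the determinant of the pairings. *)
Definition wedge3 (x y z : 'rV[R]_n) (xi eta zeta : 'rV[R]_n) : R :=
    dpair xi x * dpair eta y * dpair zeta z
  - dpair xi x * dpair eta z * dpair zeta y
  - dpair xi y * dpair eta x * dpair zeta z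
  + dpair xi y * dpair eta z * dpair zeta x
  + dpair xi z * dpair eta x * dpair zeta y
  - dpair xi z * dpair eta y * dpair zeta x.

Definition wedge_vb (x : 'rV[R]_n) (P : 'M[R]_n) (xi eta zeta : 'rV[R]_n) : R :=
  2^-1 * \sum_(a < n) \sum_(b < n) P a b * wedge3 x (ebas a) (ebas b) xi eta zeta.

Definition schouten_dec (br : 'rV[R]_n -> 'rV[R]_n -> 'rV[R]_n)
  (X Y Z W : 'rV[R]_n) (xi eta zeta : 'rV[R]_n) : R :=
    wedge3 (br X Z) Y W xi eta zeta
  - wedge3 (br X W) Y Z xi eta zeta
  - wedge3 (br Y Z) X W xi eta zeta
  + wedge3 (br Y W) X Z xi eta zeta.

Definition schouten (br : 'rV[R]_n -> 'rV[R]_n -> 'rV[R]_n)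
  (P Q : 'M[R]_n) (xi eta zeta : 'rV[R]_n) : R :=
  4^-1 * \sum_(a < n) \sum_(b < n) \sum_(c < n) \sum_(d < n)
     P a b * Q c d * schouten_dec br (ebas a) (ebas b) (ebas c) (ebas d) xi eta zeta.

End LieDefs.

Section Smooth.
Variables (R : realType) (l n : nat).
Definition dpartial (i : 'I_l) (f : 'rV[R]_l -> 'M[R]_n) : 'rV[R]_l -> 'M[R]_n :=
  fun x => derive f x (delta_mx 0 i).
Definition iter_partial (s : seq 'I_l) (f : 'rV[R]_l -> 'M[R]_n) :=
  foldr dpartial f s.
Definition smooth_map (f : 'rV[R]_l -> 'M[R]_n) : Prop :=
  forall (s : seq 'I_l) (x : 'rV[R]_l), differentiable (iter_partial s f) x.
End Smooth.

(** Triangular dynamical r-matrix for (g, h) with g = (R^n, br) and h spanned by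
    the (independent) rows h_1..h_l of H; r is expressed in the coordinates
    (lambda^1..lambda^l) on h^* induced by that basis. *)
Definition triangular_dyn_rmatrix (R : realType) (n l : nat)
  (br : 'rV[R]_n -> 'rV[R]_n -> 'rV[R]_n) (H : 'M[R]_(l, n))
  (r : 'rV[R]_l -> 'M[R]_n) : Prop :=
  [/\ smooth_map r,
      (forall lam, skew_mx (r lam)),
      (forall lam (y : 'rV[R]_n), (y <= H)%MS -> ad_bv br y (r lam) = 0) &
      (forall lam xi eta zeta,
         \sum_(i < l) wedge_vb (row i H) (dpartial i r lam) xi eta zeta
         + 2^-1 * schouten br (r lam) (r lam) xi eta zeta = 0)].

Definition annih_h (R : realType) (n l : nat) (H : 'M[R]_(l, n)) (xi : 'rV[R]_n) :=
  forall i : 'I_l, dpair xi (row i H) = 0.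

Definition dyn_nondegenerate (R : realType) (n l : nat) (H : 'M[R]_(l, n))
  (r : 'rV[R]_l -> 'M[R]_n) : Prop :=
  forall lam (x : 'rV[R]_n), exists (y xi : 'rV[R]_n),
    [/\ (y <= H)%MS, annih_h H xi & x = y + sharp (r lam) xi].

(* Main.v *)
Require Import Defs.
Set Warnings "-all".
From HB Require Import structures.
From mathcomp Require Import all_boot all_order all_algebra.
From mathcomp Require Import all_classical all_reals all_analysis.
From mathcomp Require Import zify.
Import Order.TTheory GRing.Theory Num.Theory.
Local Open Scope ring_scope.

Lemma zmod8 (V : zmodType) (p q r s t u v w : V) :
  p + q - r - s + t + u - v - w = p - r + t - v + (q - s + u - w).
Proof. by rewrite (AC (8) (((1*3)*5)*7*(((2*4)*6)*8))). Qed.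

Set Implicit Arguments. Unset Strict Implicit.
Section Aux.
Variables (R : realType) (n : nat).
Variable br : 'rV[R]_n -> 'rV[R]_n -> 'rV[R]_n.
Hypothesis Hbr : is_lie_bracket br.

Definition Amat (y : 'rV[R]_n) : 'M[R]_n := \matrix_(a < n) br y (@ebas R n a).

Lemma br_r0 z : br z 0 = 0.
Proof.
case: Hbr => _ H2 _ _.
have := H2 1 0 0 z; rewrite !scale1r addr0 => h.
by apply: (addrI (br z 0)); rewrite addr0 -h.
Qed.

Lemma br_l0 z : br 0 z = 0.
Proof.
case: Hbr => H1 _ _ _.
have := H1 1 0 0 z; rewrite !scale1r addr0 => h.
by apply: (addrI (br 0 z)); rewrite addr0 -h.
Qed.

Lemma br_rD z x y : br z (x + y) = br z x + br z y.
Proof. by case: Hbr => _ H2 _ _; have := H2 1 x y z; rewrite !scale1r. Qed.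

Lemma br_lD z x y : br (x + y) z = br x z + br y z.
Proof. by case: Hbr => H1 _ _ _; have := H1 1 x y z; rewrite !scale1r. Qed.

Lemma br_rZ z a x : br z (a *: x) = a *: br z x.
Proof. by case: Hbr => _ H2 _ _; rewrite -[a *: x]addr0 H2 br_r0 addr0. Qed.

Lemma br_anti x y : br x y = - br y x.
Proof.
case: Hbr => _ _ H3 _.
have := H3 (x + y); rewrite br_lD !br_rD !H3 add0r addr0 => /eqP.
by rewrite addr_eq0 => /eqP.
Qed.

Lemma brM y x : br y x = x *m Amat y.
Proof.
rewrite {1}(row_sum_delta x) mulmx_sum_row.
rewrite (big_morph (br y) (br_rD y) (br_r0 y)).
apply: eq_bigr => a _; rewrite br_rZ; congr (_ *: _).
by rewrite rowK.
Qed.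

Lemma lin_sum2 (f : 'M[R]_n -> 'M[R]_n)
  (hf : forall a x y, f (a *: x + y) = a *: f x + f y) (c : 'M[R]_n) :
  f (\sum_(i < n) \sum_(j < n) c i j *: delta_mx i j)
  = \sum_(i < n) \sum_(j < n) c i j *: f (delta_mx i j).
Proof.
have f0 : f 0 = 0.
  have := hf 1 0 0; rewrite !scale1r addr0 => h.
  by apply: (addrI (f 0)); rewrite addr0 -h.
have fD : forall x y, f (x + y) = f x + f y.
  by move=> x y; have := hf 1 x y; rewrite !scale1r.
rewrite (big_morph f fD f0); apply: eq_bigr => i _.
rewrite (big_morph f fD f0); apply: eq_bigr => j _.
by rewrite -[_ *: _]addr0 hf f0 addr0.
Qed.

Lemma ad_bvE y (P : 'M[R]_n) : skew_mx P ->
  ad_bv br y P = (Amat y)^T *m P + P *m Amat y.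
Proof.
rewrite /skew_mx => sP.
set A := Amat y.
pose f := fun M : 'M[R]_n => A^T *m M - M^T *m A + M *m A - A^T *m M^T.
have E : forall a b, wedge2 (br y (@ebas R n a)) (@ebas R n b)
     + wedge2 (@ebas R n a) (br y (@ebas R n b)) = f (delta_mx a b).
  move=> a b; rewrite /f /wedge2 !brM /ebas -/A !trmx_mul !trmx_delta.
  rewrite !mulmxA !mul_delta_mx -!mulmxA !mul_delta_mx.
  by rewrite !addrA.
rewrite /ad_bv.
under eq_bigr => a _ do under eq_bigr => b _ do rewrite E.
rewrite -lin_sum2; last first.
  move=> a x z; rewrite /f !linearD /= !linearZ /=.
  rewrite !mulmxDl -!scalemxAl !scalerN !opprD !addrA.
  by rewrite zmod8 !addrA.
rewrite -matrix_sum_delta /f sP mulmxN mulNmx !opprK.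
rewrite [X in 2^-1 *: X](_ : _ = (A^T *m P + P *m A) + (A^T *m P + P *m A)); last first.
  by rewrite (AC (4) ((1*2)*(4*3))).
rewrite -{1 2}[A^T *m P + P *m A]scale1r -scalerDl scalerA.
have -> : (1 + 1 : R) = 2%:R by rewrite mulr2n.
by rewrite mulVf ?scale1r // pnatr_eq0.
Qed.
Lemma sharpE (P : 'M[R]_n) xi : sharp P xi = xi *m P.
Proof. by apply/rowP => b; rewrite !mxE. Qed.

End Aux.

Theorem lemma4p5 (R : realType) (n l : nat)
  (br : 'rV[R]_n -> 'rV[R]_n -> 'rV[R]_n) (H : 'M[R]_(l, n)) :
  is_lie_bracket br ->
  row_free H ->
  (forall i j : 'I_l, br (row i H) (row j H) = 0) ->
  (exists r : 'rV[R]_l -> 'M[R]_n,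
      triangular_dyn_rmatrix br H r /\ dyn_nondegenerate H r) ->
  exists M : 'M[R]_n,
    [/\ mxdirect (H + M)%MS, row_full (H + M)%MS &
        forall y x : 'rV[R]_n, (y <= H)%MS -> (x <= M)%MS -> (br y x <= M)%MS].
Proof.
move=> Hbr Hfree Hab [r [[_ skr hinv _] nd]].
pose P := r 0; have sP : P^T = - P := skr 0.
pose K := kermx H^T.
have HA0 : forall y, (y <= H)%MS -> H *m Amat br y = 0.
  move=> y /submxP [w ->]; apply/row_matrixP => i.
  rewrite row_mul row0 -(brM Hbr) (br_anti Hbr) (brM Hbr) -mulmxA.
  have -> : H *m Amat br (row i H) = 0.
    by apply/row_matrixP => j; rewrite row_mul row0 -(brM Hbr) Hab.
  by rewrite mulmx0 oppr0.
have full : row_full (H + K *m P)%MS.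
  rewrite -sub1mx; apply/row_subP => i; rewrite row1.
  have [y [xi [yH ann ->]]] := nd 0 (delta_mx 0 i).
  apply: addmx_sub_adds => //; rewrite sharpE; apply: submxMr.
  apply/sub_kermxP; apply/rowP => j; rewrite [RHS]mxE -(ann j) !mxE.
  by apply: eq_bigr => a _; rewrite !mxE.
exists (K *m P); split => //.
- apply/mxdirect_addsP; apply/eqP; rewrite -submx0.
  have [h4 <-] := mxrank_adds_leqif H (K *m P).
  have h1 : \rank (H + K *m P)%MS = n by apply/eqP.
  have h2 : \rank H = l by apply/eqP.
  have h3 : (\rank (K *m P) <= n - l)%N.
    by rewrite (leq_trans (mxrankM_maxl _ _)) // mxrank_ker mxrank_tr h2.
  have h5 : (l <= n)%N by rewrite -h2 rank_leq_col.
  rewrite h1 h2 in h4 *; apply/eqP; lia.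
- move=> y x yH /submxP [D ->].
  have PA : P *m Amat br y = - ((Amat br y)^T *m P).
    apply/eqP; rewrite -addr_eq0 addrC -(ad_bvE Hbr y sP); apply/eqP.
    exact: hinv.
  rewrite (brM Hbr) -(mulmxA D) -(mulmxA K) PA mulmxN (mulmxA K) mulmxN.
  rewrite (mulmxA D) -mulNmx; apply: submxMr.
  apply/sub_kermxP; rewrite mulNmx -(mulmxA D) -(mulmxA K) -trmx_mul HA0 // trmx0.
  by rewrite !mulmx0 oppr0.
Qed.
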